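(* Let $R$ be a commutative ring with identity. The following are equivalent: (1) $R[X]_A$ is a residually principal ideal ring; (2) $R[X]_A$ is a residually valuation ring; (3) $R[X]_A$ is a residually Bézout ring; (4) $R[X]_A$ is a residually Prüfer ring; (5) $R$ is zero-dimensional (i.e., has Krull dimension $0$).
   Context: $X$ is an indeterminate over $R$, $A=\{f\in R[X]\mid f(0)=1\}$, and $R[X]_A$ is the localization of $R[X]$ at $A$. For a property (P) of integral domains, a ring $T$ is called residually (P) if $T/\mathfrak p$ has property (P) for every prime ideal $\mathfrak p$ of $T$. Thus ''residually principal ideal ring'' means $T/\mathfrak p$ is a principal ideal domain for all primes $\mathfrak p$, and similarly for valuation domains, Bézout domains (every finitely generated ideal principal) and Prüfer domains (every nonzero finitely generated ideal invertible). *)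

(* Defs.v *)
From HB Require Import structures.
From mathcomp Require Import all_boot all_order all_algebra.
Set Implicit Arguments.
Unset Strict Implicit.
Unset Printing Implicit Defensive.
Import GRing.Theory.
Local Open Scope ring_scope.

Section Ideals.
Variable T : comNzRingType.

Definition is_ideal (I : T -> Prop) : Prop :=
  [/\ I 0, (forall x y, I x -> I y -> I (x + y)) & (forall a x, I x -> I (a * x))].

Definition prime_ideal (I : T -> Prop) : Prop :=
  [/\ is_ideal I, ~ I 1 & forall x y, I (x * y) -> I x \/ I y].

Definition strict_incl (I J : T -> Prop) : Prop :=
  (forall x, I x -> J x) /\ exists x, J x /\ ~ I x.

Definition gen_by (n : nat) (s : 'I_n -> T) (x : T) : Prop :=
  exists c : 'I_n -> T, x = \sum_(i < n) c i * s i.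

Definition principal_ideal (I : T -> Prop) : Prop :=
  exists a : T, forall x, I x <-> exists r, x = r * a.

Definition fg_ideal (I : T -> Prop) : Prop :=
  exists n (s : 'I_n -> T), forall x, I x <-> gen_by s x.

Definition ideal_mul (I J : T -> Prop) (x : T) : Prop :=
  exists n (a b : 'I_n -> T),
    (forall i, I (a i) /\ J (b i)) /\ x = \sum_(i < n) a i * b i.

Definition pideal (d : T) (x : T) : Prop := exists r, x = r * d.

Definition is_domain : Prop := forall x y : T, x * y = 0 -> x = 0 \/ y = 0.

(* An ideal I of a domain is invertible iff I * d^-1 J = T for some
   (integral) ideal J and nonzero d, i.e. some fractional ideal d^-1 J. *)
Definition invertible_ideal (I : T -> Prop) : Prop :=
  exists (J : T -> Prop) (d : T),
    is_ideal J /\ d != 0 /\ forall x, ideal_mul I J x <-> pideal d x.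

Definition zero_dimensional : Prop :=
  (exists p, prime_ideal p) /\
  ~ (exists p q, prime_ideal p /\ prime_ideal q /\ strict_incl p q).

End Ideals.

Definition PID (D : comNzRingType) : Prop :=
  is_domain D /\ forall I : D -> Prop, is_ideal I -> principal_ideal I.

Definition valuation_domain (D : comNzRingType) : Prop :=
  is_domain D /\ forall a b : D, (exists r, b = r * a) \/ (exists r, a = r * b).

Definition bezout_domain (D : comNzRingType) : Prop :=
  is_domain D /\
  forall I : D -> Prop, is_ideal I -> fg_ideal I -> principal_ideal I.

Definition prufer_domain (D : comNzRingType) : Prop :=
  is_domain D /\
  forall I : D -> Prop, is_ideal I -> fg_ideal I -> (exists x, I x /\ x != 0) ->
    invertible_ideal I.

(* T is residually P: T/p has P for every prime p. T/p is represented by any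
   surjective ring morphism out of T with kernel exactly p (the quotient is
   unique up to isomorphism and all properties above are iso-invariant). *)
Definition residually (P : comNzRingType -> Prop) (T : comNzRingType) : Prop :=
  forall p : T -> Prop, prime_ideal p ->
  forall (D : comNzRingType) (pi : {rmorphism T -> D}),
    (forall d : D, exists t, pi t = d) ->
    (forall t, pi t = 0 <-> p t) ->
    P D.

(* A = {f in R[X] | f(0) = 1};  phi : R[X] -> S exhibits S as R[X]_A. *)
Definition in_A (R : comNzRingType) (f : {poly R}) : Prop := f.[0] = 1.

Definition is_localization_A (R : comNzRingType) (S : comNzRingType)
    (phi : {rmorphism {poly R} -> S}) : Prop :=
  [/\ (forall a, in_A a -> exists y, phi a * y = 1),
      (forall s : S, exists f a, in_A a /\ s * phi a = phi f) &
      (forall f, phi f = 0 -> exists a, in_A a /\ a * f = 0)].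

(* Main.v *)
Require Import Defs.
From HB Require Import structures.
From mathcomp Require Import all_boot all_order all_algebra.
From mathcomp Require Import boolp classical_sets.
From Stdlib Require Import Classical.
From mathcomp Require Import ring.
Set Implicit Arguments.
Unset Strict Implicit.
Unset Printing Implicit Defensive.
Import GRing.Theory.
Local Open Scope ring_scope.

Section Gen.
Variable T : comNzRingType.
Implicit Types (I J : T -> Prop).

Lemma ideal_sum I (n : nat) (F : 'I_n -> T) :
  is_ideal I -> (forall i, I (F i)) -> I (\sum_(i < n) F i).
Proof. by case=> I0 ID _ HF; elim/big_ind: _ => // i _; apply: HF. Qed.

Lemma ideal_opp I x : is_ideal I -> I x -> I (- x).
Proof. by case=> _ _ IM Ix; rewrite -mulN1r; apply: IM. Qed.

Lemma ideal_sub I x y : is_ideal I -> I x -> I y -> I (x - y).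
Proof. by move=> hI Ix Iy; case: (hI) => _ ID _; apply: ID => //; apply: ideal_opp. Qed.

Lemma ideal_mulr I x a : is_ideal I -> I x -> I (x * a).
Proof. by case=> _ _ IM Ix; rewrite mulrC; apply: IM. Qed.

Definition addelt J x := fun z => exists a r, J a /\ z = a + r * x.

Lemma ideal_addelt J x : is_ideal J -> is_ideal (addelt J x).
Proof.
case=> J0 JD JM; split.
- by exists 0, 0; rewrite mul0r addr0.
- move=> _ _ [a [r [Ja ->]]] [b [s [Jb ->]]]; exists (a + b), (r + s); split; first exact: JD.
  by rewrite mulrDl; rewrite addrACA.
- move=> c _ [a [r [Ja ->]]]; exists (c * a), (c * r); split; first exact: JM.
  by rewrite mulrDr mulrA.
Qed.

Lemma addelt_sub J x y : is_ideal J -> J y -> addelt J x y.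
Proof. by move=> _ Jy; exists y, 0; rewrite mul0r addr0. Qed.

Lemma addelt_x J x : is_ideal J -> addelt J x x.
Proof. by case=> J0 _ _; exists 0, 1; rewrite mul1r add0r. Qed.

Lemma prime_above I : is_ideal I -> ~ I 1 ->
  exists p, prime_ideal p /\ (forall x, I x -> p x).
Proof.
move=> hI nI1.
pose Pc := fun J : set T => J = set0 \/ (is_ideal J /\ ~ J 1 /\ (forall x, I x -> J x)).
have PcE J x : Pc J -> J x -> [/\ is_ideal J, ~ J 1 & (forall x, I x -> J x)].
  by case=> [->//|[? [? ?]]].
have ZB : forall F : set (set T), (F `<=` Pc)%classic -> total_on F subset ->
    Pc (\bigcup_(X in F) X)%classic.
  move=> F FP Ftot.
  case: (pselect (exists J, F J /\ exists x, J x)) => [[J0 [FJ0 [x0 J0x0]]]|nF]; last first.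
    left; rewrite predeqE => x; split => //= -[X FX Xx].
    by apply: nF; exists X; split => //; exists x.
  right; have [hJ0 _ IJ0] := PcE _ _ (FP _ FJ0) J0x0.
  split; [split|split].
  - by exists J0 => //; case: hJ0.
  - move=> x y [X FX Xx] [Y FY Yy].
    have [XY|YX] := Ftot _ _ FX FY.
    + have [[_ YD _] _ _] := PcE _ _ (FP _ FY) Yy.
      by exists Y => //; apply: YD => //; apply: XY.
    + have [[_ XD _] _ _] := PcE _ _ (FP _ FX) Xx.
      by exists X => //; apply: XD => //; apply: YX.
  - move=> a x [X FX Xx]; have [[_ _ XM] _ _] := PcE _ _ (FP _ FX) Xx.
    by exists X => //; apply: XM.
  - by move=> [X FX X1]; have [_ ? _] := PcE _ _ (FP _ FX) X1.
  - by move=> x Ix; exists J0 => //; apply: IJ0.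
have [M [PM Mmax]] := Zorn_bigcup ZB.
case: PM => [M0|[hM [nM1 IM]]].
  exfalso; apply: (Mmax I); last by right.
  rewrite M0; split => // /(_ 0); case: hI => I0 _ _ /(_ I0).
  by [].
exists M; split => //; split => // x y Mxy.
apply: NNPP => /not_orP [nMx nMy].
have key z : ~ M z -> exists a r, M a /\ 1 = a + r * z.
  move=> nMz; apply: NNPP => n1.
  apply: (Mmax (addelt M z)).
    split; first by move=> w Mw; apply: addelt_sub.
    by move=> /(_ z (addelt_x z hM)).
  right; split; first exact: ideal_addelt.
  split; first by move=> [a [r [Ma E]]]; apply: n1; exists a, r.
  by move=> w Iw; apply: addelt_sub => //; apply: IM.
have [a [r [Ma Ea]]] := key _ nMx; have [b [s [Mb Eb]]] := key _ nMy.
apply: nM1; rewrite -(mulr1 1) {1}Ea Eb.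
case: (hM) => M0 MD MM.
rewrite mulrDl !mulrDr; apply: (MD); [apply: (MD)|apply: (MD)].
- by apply: (MM).
- by rewrite mulrC; apply: (MM).
- by apply: (MM).
- by rewrite mulrACA; apply: (MM).
Qed.

End Gen.
Section Easy.
Variable T : comNzRingType.

Lemma gen_by_ideal n (s : 'I_n -> T) : is_ideal (gen_by s).
Proof.
split.
- by exists (fun _ => 0); rewrite big1 // => i _; rewrite mul0r.
- move=> _ _ [c ->] [c' ->]; exists (fun i => c i + c' i).
  by rewrite -big_split /=; apply: eq_bigr => i _; rewrite mulrDl.
- move=> a _ [c ->]; exists (fun i => a * c i).
  by rewrite mulr_sumr; apply: eq_bigr => i _; rewrite mulrA.
Qed.

Lemma gen_by_s n (s : 'I_n -> T) i : gen_by s (s i).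
Proof.
exists (fun j => (j == i)%:R); rewrite (bigD1 i) //= eqxx mul1r big1 ?addr0 //.
by move=> j /negPf ->; rewrite mul0r.
Qed.

Lemma pideal_ideal (d : T) : is_ideal (pideal d).
Proof.
split.
- by exists 0; rewrite mul0r.
- by move=> _ _ [r ->] [s ->]; exists (r + s); rewrite mulrDl.
- by move=> a _ [r ->]; exists (a * r); rewrite mulrA.
Qed.

Lemma val_gen : (forall a b : T, (exists r, b = r * a) \/ (exists r, a = r * b)) ->
  forall n (s : 'I_n -> T), exists g, gen_by s g /\ forall i, exists r, s i = r * g.
Proof.
move=> hv; elim=> [|n IH] s.
  exists 0; split; last by case.
  by exists (fun _ => 0); rewrite big_ord0.
have [g' [[c' Eg'] hs']] := IH (fun i => s (lift ord0 i)).
have [[r Eg]|[r Es0]] := hv (s ord0) g'.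
- exists (s ord0); split; first exact: gen_by_s.
  move=> i; case: (unliftP ord0 i) => [j ->|->]; last by exists 1; rewrite mul1r.
  by have [rj ->] := hs' j; rewrite Eg mulrA; exists (rj * r).
- exists g'; split.
    exists (fun i => if unlift ord0 i is Some j then c' j else 0).
    rewrite big_ord_recl unlift_none mul0r add0r Eg'.
    by apply: eq_bigr => j _; rewrite liftK.
  move=> i; case: (unliftP ord0 i) => [j ->|->]; first exact: hs'.
  by exists r.
Qed.

End Easy.

Lemma pid_bezout (D : comNzRingType) : PID D -> bezout_domain D.
Proof. by case=> hd hp; split => // I hI _; apply: hp. Qed.

Lemma val_bezout (D : comNzRingType) : valuation_domain D -> bezout_domain D.
Proof.
case=> hd hv; split => // I hI [n [s Hs]].
have [g [Gg Dg]] := val_gen hv s.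
exists g => x; rewrite Hs; split.
- move=> [c ->]; apply: (ideal_sum (pideal_ideal g)).
  move=> i; have [r ->] := Dg i; exists (c i * r); by rewrite mulrA.
- move=> [r ->]; case: (gen_by_ideal s) => _ _ IM; exact: IM.
Qed.

Lemma bezout_prufer (D : comNzRingType) : bezout_domain D -> prufer_domain D.
Proof.
case=> hd hb; split => // I hI hfg [x [Ix x0]].
have [a Ha] := hb I hI hfg.
have a0 : a != 0.
  apply/eqP => a0; move: x0; have [r ->] := (Ha x).1 Ix.
  by rewrite a0 mulr0 eqxx.
exists (fun _ => True), a; split; first by [].
split => // y; split.
- move=> [n [u [v [Huv ->]]]]; apply: (ideal_sum (pideal_ideal a)).
  move=> i; apply: (ideal_mulr _ (pideal_ideal a)).
  by apply/Ha; case: (Huv i).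
- move=> [r ->]; exists 1%N, (fun _ => a), (fun _ => r); split.
    by move=> i; split => //; apply/Ha; exists 1; rewrite mul1r.
  by rewrite big_ord1 mulrC.
Qed.

Lemma struct_lemma (D : comNzRingType) (x : D) : is_domain D ->
  (forall d : D, d = 0 \/ exists n u v, u * v = 1 /\ d = x ^+ n * u) ->
  PID D /\ valuation_domain D.
Proof.
move=> hd hf.
have divi m n u v w : u * v = 1 -> (m <= n)%N ->
    x ^+ n * w = (x ^+ (n - m) * w * v) * (x ^+ m * u).
  move=> uv mn; rewrite -{1}(subnK mn) exprD.
  transitivity (x ^+ (n - m) * x ^+ m * w * (u * v)); first by rewrite uv mulr1.
  ring.
split; split => //.
- move=> I hI.
  case: (pselect (exists y, I y /\ y != 0)) => [[y [Iy y0]]|nI]; last first.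
    exists 0 => z; split.
      by move=> Iz; exists 0; rewrite mulr0; apply: NNPP => /eqP z0; apply: nI; exists z.
    by move=> [r ->]; rewrite mulr0; case: hI.
  pose Pn n := `[< exists y u v, I y /\ y != 0 /\ u * v = 1 /\ y = x ^+ n * u >].
  have exP : exists n, Pn n.
    case: (hf y) => [yz|[n [u [v [uv Ey]]]]]; first by rewrite yz eqxx in y0.
    by exists n; apply/asboolP; exists y, u, v.
  case: (ex_minnP exP) => m /asboolP [y1 [u0 [v0 [Iy0 [y00 [uv0 Ey0]]]]]] minm.
  exists y1 => z; split.
  + move=> Iz; case: (hf z) => [->|[k [w [w' [ww' Ez]]]]]; first by exists 0; rewrite mul0r.
    case: (eqVneq z 0) => [->|z0]; first by exists 0; rewrite mul0r.
    have mk : (m <= k)%N by apply: minm; apply/asboolP; exists z, w, w'.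
    by exists (x ^+ (k - m) * w * v0); rewrite Ez Ey0; apply: divi.
  + by move=> [r ->]; case: hI => _ _; apply.
- move=> a b.
  case: (hf a) => [->|[m [u [v [uv Ea]]]]]; first by right; exists 0; rewrite mul0r.
  case: (hf b) => [->|[n [w [z [wz Eb]]]]]; first by left; exists 0; rewrite mul0r.
  case: (leqP m n) => mn.
    by left; exists (x ^+ (n - m) * w * v); rewrite Ea Eb; apply: divi.
  by right; exists (x ^+ (m - n) * u * z); rewrite Ea Eb; apply: divi => //; apply: ltnW.
Qed.

Lemma zd_residual (R S : comNzRingType) (phi : {rmorphism {poly R} -> S})
    (hS : is_localization_A phi) : zero_dimensional R ->
  forall P : S -> Prop, prime_ideal P ->
  forall (D : comNzRingType) (pi : {rmorphism S -> D}),
    (forall d : D, exists t, pi t = d) ->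
    (forall t, pi t = 0 <-> P t) ->
    PID D /\ valuation_domain D.
Proof.
move=> [_ nchain] P [[P0 PD PM] nP1 Pp] D pi pis pik.
case: hS => hA hfrac hker.
have hd : is_domain D.
  move=> a b; have [s <-] := pis a; have [t <-] := pis b.
  rewrite -rmorphM => /pik /Pp [/pik|/pik]; by [left|right].
pose psi f := pi (phi f).
have unitA a : in_A a -> exists z, psi a * z = 1.
  by move=> /hA [y hy]; exists (pi y); rewrite /psi -rmorphM hy rmorph1.
have fieldR r : psi r%:P != 0 -> exists s, psi s%:P * psi r%:P = 1.
  move=> nr.
  pose pp := fun r : R => psi r%:P = 0.
  have ppI : is_ideal pp.
    split; rewrite /pp /psi.
    - by rewrite !rmorph0.
    - by move=> a b Ha Hb; rewrite polyCD !rmorphD Ha Hb addr0.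
    - by move=> a b Hb; rewrite polyCM !rmorphM Hb mulr0.
  have ppP : prime_ideal pp.
    split => //; first by rewrite /pp /psi !rmorph1; apply/eqP; exact: oner_neq0.
    by move=> a b; rewrite /pp /psi polyCM !rmorphM => /hd.
  case: (pselect (addelt pp r 1)) => [[a [t [Ha E]]]|n1].
    move: Ha; rewrite /pp /psi => Ha; exists t; move: (congr1 psi (congr1 polyC E)).
    by rewrite /psi polyCD polyCM !rmorphD !rmorphM Ha add0r !rmorph1.
  have [q [qP Jq]] := prime_above (ideal_addelt r ppI) n1.
  exfalso; apply: nchain; exists pp, q; split; first exact: ppP; split; first exact: qP; split.
    by move=> z pz; apply: Jq; apply: addelt_sub.
  exists r; split; last by move=> /eqP; rewrite (negPf nr).
  exact: (Jq _ (addelt_x r ppI)).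
pose x := psi 'X.
have polyform f : psi f = 0 \/ exists n u v, u * v = 1 /\ psi f = x ^+ n * u.
  elim/poly_ind: f => [|p c IH]; first by left; rewrite /psi !rmorph0.
  have Eq : psi (p * 'X + c%:P) = psi p * x + psi c%:P by rewrite /psi !rmorphD !rmorphM.
  case: (eqVneq (psi c%:P) 0) => [c0|c0].
    rewrite Eq c0 addr0; case: IH => [->|[n [u [v [uv ->]]]]]; first by left; rewrite mul0r.
    by right; exists n.+1, u, v; split => //; rewrite exprSr mulrAC.
  have [s hs] := fieldR _ c0.
  pose g := s%:P * (p * 'X + c%:P) + (1 - s * c)%:P.
  have gA : in_A g.
    by rewrite /in_A /g !hornerE /=; ring.
  have [z hz] := unitA _ gA.
  have Eg : psi g = psi s%:P * psi (p * 'X + c%:P).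
    move: hs; rewrite /g /psi => hs.
    by rewrite polyCB polyCM !(rmorphD, rmorphN, rmorphM, rmorph1) hs subrr addr0.
  right; exists 0%N, (psi (p * 'X + c%:P)), (psi s%:P * z); split; last by rewrite expr0 mul1r.
  by rewrite mulrA [_ * psi s%:P]mulrC -Eg.
apply: (@struct_lemma D x hd) => d.
have [t <-] := pis d; have [f [a [aA Ef]]] := hfrac t.
have [z hz] := unitA _ aA.
have Ed : pi t = psi f * z.
  by rewrite /psi -Ef rmorphM -mulrA -/(psi a) hz mulr1.
rewrite Ed; case: (polyform f) => [->|[n [u [v [uv ->]]]]]; first by left; rewrite mul0r.
right; exists n, (u * z), (v * psi a); split; last by rewrite mulrA.
by rewrite mulrACA uv mul1r mulrC.
Qed.

Lemma ideal_sum_pred (T : comNzRingType) (I : T -> Prop) (n : nat) (P : pred 'I_n) (F : 'I_n -> T) :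
  is_ideal I -> (forall i, P i -> I (F i)) -> I (\sum_(i < n | P i) F i).
Proof. by case=> I0 ID _ HF; elim/big_ind: _ => // i Pi; apply: HF. Qed.

Section PX.
Variables (R : comNzRingType) (p : R -> Prop) (hp : prime_ideal p).
Definition pX (f : {poly R}) := forall i, p (f`_i).

Lemma pX_ideal : is_ideal pX.
Proof.
case: hp => [[p0 pD pM] _ _]; split.
- by move=> i; rewrite coef0.
- by move=> f g Hf Hg i; rewrite coefD; apply: pD.
- move=> a f Hf i; rewrite coefM; apply: ideal_sum; first by split.
  by move=> j; apply: pM.
Qed.

Lemma pX_notA a : in_A a -> ~ pX a.
Proof. by case: hp => _ n1 _; rewrite /in_A horner_coef0 => a0 /(_ 0%N); rewrite a0. Qed.

Lemma pX_prime f g : pX (f * g) -> pX f \/ pX g.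
Proof.
case: hp => [[p0 pD pM] n1 pp] Hfg.
apply: NNPP => /not_or_and [nf ng].
have exf : exists i, `[< ~ p f`_i >].
  by apply: NNPP => nx; apply: nf => i; apply: NNPP => ni; apply: nx; exists i; apply/asboolP.
have exg : exists j, `[< ~ p g`_j >].
  by apply: NNPP => nx; apply: ng => i; apply: NNPP => ni; apply: nx; exists i; apply/asboolP.
case: (ex_minnP exf) => i /asboolP nfi minf.
case: (ex_minnP exg) => j /asboolP ngj ming.
have fk k : (k < i)%N -> p f`_k.
  by move=> ki; apply: NNPP => nk; have := minf k (introT (asboolP _) nk); rewrite leqNgt ki.
have gk k : (k < j)%N -> p g`_k.
  by move=> kj; apply: NNPP => nk; have := ming k (introT (asboolP _) nk); rewrite leqNgt kj.
have H := Hfg (i + j)%N; rewrite coefM in H.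
have ii : (i < (i + j).+1)%N by rewrite ltnS leq_addr.
rewrite (bigD1 (Ordinal ii)) //= addKn in H.
have rest : p (\sum_(k < (i + j).+1 | k != Ordinal ii) f`_k * g`_(i + j - k)).
  apply: ideal_sum_pred; first by split.
  move=> k; rewrite -val_eqE /= => nki.
  case: (ltngtP k i) nki => // [ki|ik] _.
    by rewrite mulrC; apply: pM; apply: fk.
  apply: pM; apply: gk.
  by have := ltn_ord k; rewrite ltnS => kl; rewrite ltn_subLR // ltn_add2r.
have : p (f`_i * g`_j).
  have -> : f`_i * g`_j = (f`_i * g`_j + \sum_(k < (i + j).+1 | k != Ordinal ii) f`_k * g`_(i + j - k)) - \sum_(k < (i + j).+1 | k != Ordinal ii) f`_k * g`_(i + j - k) by rewrite addrK.
  apply: pD => //; rewrite -mulN1r; exact: pM.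
by case/pp.
Qed.

End PX.

Lemma in_AM (R : comNzRingType) (a b : {poly R}) : in_A a -> in_A b -> in_A (a * b).
Proof. by rewrite /in_A hornerM => -> ->; rewrite mulr1. Qed.

Lemma in_A1 (R : comNzRingType) : in_A (1 : {poly R}).
Proof. by rewrite /in_A hornerC. Qed.

Section PS.
Variables (R S : comNzRingType) (phi : {rmorphism {poly R} -> S}).
Variable (hS : is_localization_A phi).
Variables (p : R -> Prop) (hp : prime_ideal p).

Definition Ps (s : S) := exists f a, [/\ in_A a, s * phi a = phi f & pX p f].

Lemma Ps_phi h : Ps (phi h) -> pX p h.
Proof.
case: hS => _ _ hker [f [a [aA Ea pf]]].
have [e [eA He]] : exists e, in_A e /\ e * (h * a - f) = 0.
  by apply: hker; rewrite rmorphB rmorphM Ea subrr.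
have : pX p ((e * a) * h).
  have -> : e * a * h = e * f.
    by apply/eqP; rewrite -subr_eq0 -He; apply/eqP; ring.
  by case: (pX_ideal hp) => _ _; apply.
case/(pX_prime hp) => // /(pX_prime hp) [].
  by move/(pX_notA hp eA).
by move/(pX_notA hp aA).
Qed.

Lemma Ps_prime : prime_ideal Ps.
Proof.
have [X0 XD XM] := pX_ideal hp.
case: (hS) => _ hfrac _.
split; [split| |].
- by exists 0, 1; split; [exact: in_A1 | by rewrite !rmorph0 mul0r | exact: X0].
- move=> s t [f [a [aA Ea pf]]] [g [b [bA Eb pg]]].
  exists (f * b + g * a), (a * b); split; first exact: in_AM.
    by rewrite rmorphD !rmorphM -Ea -Eb; ring.
  by apply: XD; rewrite mulrC; apply: XM.
- move=> r s [f [a [aA Ea pf]]]; have [h [c [cA Ec]]] := hfrac r.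
  exists (h * f), (c * a); split; first exact: in_AM.
    by rewrite !rmorphM -Ec -Ea; ring.
  exact: XM.
- by rewrite -(rmorph1 phi) => /Ps_phi; exact: (pX_notA hp (in_A1 R)).
- move=> s t [h [c [cA Ec ph]]].
  have [f [a [aA Ea]]] := hfrac s; have [g [b [bA Eb]]] := hfrac t.
  have : Ps (phi (f * g)).
    exists (h * (a * b)), c; split => //; last by rewrite mulrC; apply: XM.
    by rewrite !rmorphM -Ea -Eb -Ec; ring.
  case/Ps_phi/(pX_prime hp) => [pf|pg]; [left; exists f, a | right; exists g, b]; by split.
Qed.

End PS.

Lemma not_prufer (R S : comNzRingType) (phi : {rmorphism {poly R} -> S})
    (hS : is_localization_A phi) (p q : R -> Prop) (pP : prime_ideal p)
    (qP : prime_ideal q) (pq : forall x, p x -> q x) (a : R) (qa : q a) (npa : ~ p a)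
    (D : comNzRingType) (pi : {rmorphism S -> D})
    (pis : forall d : D, exists t, pi t = d)
    (pik : forall t, pi t = 0 <-> Ps phi p t) : ~ prufer_domain D.
Proof.
move=> [hd hpr].
case: (hS) => hA hfrac hker.
have kerpsi f : pi (phi f) = 0 -> pX p f.
  by move=> H; apply: (Ps_phi hS pP); apply/pik.
have rep d : exists f b, in_A b /\ d * pi (phi b) = pi (phi f).
  have [t <-] := pis d; have [f [b [bA E]]] := hfrac t.
  by exists f, b; split => //; rewrite -rmorphM E.
have cancel (y z d : D) : d != 0 -> y * d = z * d -> y = z.
  move=> d0 E; have : (y - z) * d = 0 by rewrite mulrBl E subrr.
  case/hd => [/eqP|/eqP]; last by rewrite (negPf d0).
  by rewrite subr_eq0 => /eqP.
case: (pP) => [[p0 pD pM] np1 pp].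
case: (qP) => [[q0 qD qM] nq1 qp].
set A' := pi (phi a%:P); set X' := pi (phi 'X).
pose s (i : 'I_2) := if val i == 0%N then A' else X'.
have hI := gen_by_ideal s.
have X0 : X' != 0.
  by apply/eqP => /kerpsi /(_ 1%N); rewrite coefX eqxx.
have Is0 : gen_by s A' := gen_by_s s ord0.
have Is1 : gen_by s X' := gen_by_s s (@Ordinal 2 1 isT).
have [J [d [hJ [d0 HJ]]]] := hpr _ hI (ex_intro _ 2%N (ex_intro _ s (fun _ => conj id id)))
  (ex_intro _ X' (conj Is1 X0)).
case: (hJ) => J0 JD JM.
have Id : ideal_mul (gen_by s) J d by apply/HJ; exists 1; rewrite mul1r.
pose U w := exists u v, J u /\ J v /\ w = A' * u + X' * v.
have hU : is_ideal U.
  split.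
  - by exists 0, 0; rewrite !mulr0 addr0.
  - move=> _ _ [u [v [Ju [Jv ->]]]] [u' [v' [Ju' [Jv' ->]]]].
    by exists (u + u'), (v + v'); split; [exact: JD | split; [exact: JD | ring]].
  - move=> c _ [u [v [Ju [Jv ->]]]].
    by exists (c * u), (c * v); split; [exact: JM | split; [exact: JM | ring]].
have [u [v [Ju [Jv Ed]]]] : U d.
  case: Id => n [uu [vv [huv ->]]]; apply: ideal_sum hU _ => i.
  case: (huv i) => [[c ->] Jvi].
  rewrite !big_ord_recl big_ord0 addr0.
  exists (c ord0 * vv i), (c (lift ord0 ord0) * vv i).
  split; first exact: JM. split; first exact: JM.
  rewrite /s /=; ring.
have mulI (y z : D) : gen_by s y -> J z -> exists r, y * z = r * d.
  move=> gy Jz; apply/HJ; exists 1%N, (fun _ => y), (fun _ => z); split => //.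
  by rewrite big_ord1.
have [al Eal] := mulI _ _ Is0 Ju.
have [be Ebe] := mulI _ _ Is1 Jv.
have [ga Ega] := mulI _ _ Is1 Ju.
have [de Ede] := mulI _ _ Is0 Jv.
have e1 : al + be = 1.
  by apply: (cancel _ _ d d0); rewrite mulrDl -Eal -Ebe mul1r Ed.
have e2 : X' * al = A' * ga.
  apply: (cancel _ _ d d0); rewrite -!mulrA -Eal -Ega; ring.
have e3 : A' * be = X' * de.
  apply: (cancel _ _ d d0); rewrite -!mulrA -Ebe -Ede; ring.
have [f1 [b1 [b1A F1]]] := rep al.
have [f2 [b2 [b2A F2]]] := rep be.
have [f3 [b3 [b3A F3]]] := rep ga.
have [f4 [b4 [b4A F4]]] := rep de.
have c1 : pX p ('X * f1 * b3 - a%:P * f3 * b1).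
  apply: kerpsi; rewrite !(rmorphB, rmorphM) -/A' -/X' -F1 -F3.
  transitivity ((X' * al - A' * ga) * pi (phi b1) * pi (phi b3)); first ring.
  by rewrite e2 subrr !mul0r.
have c2 : pX p (a%:P * f2 * b4 - 'X * f4 * b2).
  apply: kerpsi; rewrite !(rmorphB, rmorphM) -/A' -/X' -F2 -F4.
  transitivity ((A' * be - X' * de) * pi (phi b2) * pi (phi b4)); first ring.
  by rewrite e3 subrr !mul0r.
have c3 : pX p (f1 * b2 + f2 * b1 - b1 * b2).
  apply: kerpsi; rewrite !(rmorphB, rmorphD, rmorphM) -F1 -F2.
  transitivity ((al + be - 1) * pi (phi b1) * pi (phi b2)); first ring.
  by rewrite e1 subrr !mul0r.
move: b1A b2A b3A b4A; rewrite /in_A !horner_coef0 => b10 b20 b30 b40.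
have h1 := c1 1%N; rewrite coefB -!mulrA coefXM coefCM /= coef0M b30 mulr1 in h1.
have h2 := c2 0%N; rewrite coefB -!mulrA coefXM coefCM /= coef0M b40 mulr1 subr0 in h2.
have h3 := c3 0%N; rewrite coefB coefD !coef0M b10 b20 !mulr1 in h3.
have pf2 : p f2`_0 by case: (pp _ _ h2).
apply: nq1.
have -> : 1 = (f1`_0 - a * (f3 * b1)`_1) + a * (f3 * b1)`_1 + f2`_0
              - (f1`_0 + f2`_0 - 1) by ring.
have qN z : q z -> q (- z) by move=> qz; rewrite -mulN1r; apply: (qM).
apply: (qD); last by apply: qN; apply: pq.
apply: (qD); last by apply: pq.
apply: (qD); first by apply: pq.
by rewrite mulrC; apply: (qM).
Qed.
Local Open Scope quotient_scope.
Section Quot.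
Variables (T : comNzRingType) (P : T -> Prop) (hP : is_ideal P) (nP1 : ~ P 1).
Definition Pb : {pred T} := fun x => `[< P x >].
Lemma Pb_closed : idealr_closed Pb.
Proof.
case: hP => P0 PD PM; split.
- exact/asboolP.
- by apply/negP => /asboolP.
- move=> a u v /asboolP Pu /asboolP Pv; apply/asboolP; apply: PD => //; exact: PM.
Qed.
HB.instance Definition _ := isIdealr.Build T Pb Pb_closed.
Definition QD := {ideal_quot Pb}.
Definition qpi : {rmorphism T -> QD} := \pi_QD.
Lemma qpi_surj (d : QD) : exists t, qpi t = d.
Proof. by exists (repr d); rewrite /qpi /= reprK. Qed.
Lemma qpi_ker t : qpi t = 0 <-> P t.
Proof.
rewrite /qpi /=.
have -> : (0 : QD) = \pi_QD 0 by rewrite rmorph0.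
split.
  by move=> /eqP; rewrite -Quotient.idealrBE subr0 => /asboolP.
by move=> Pt; apply/eqP; rewrite -Quotient.idealrBE subr0; apply/asboolP.
Qed.
End Quot.

Lemma L45 (R S : comNzRingType) (phi : {rmorphism {poly R} -> S})
    (hS : is_localization_A phi) : residually prufer_domain S -> zero_dimensional R.
Proof.
move=> hres; split.
- have hI : is_ideal (fun x : R => x = 0).
    by split => // [x y -> ->|b x ->]; rewrite ?addr0 ?mulr0.
  have n1 : ~ (1 : R) = 0 by apply/eqP; exact: oner_neq0.
  by have [pp [ppP _]] := prime_above hI n1; exists pp.
- move=> [p [q [pP [qP [pq [a [qa npa]]]]]]].
  have PP := Ps_prime hS pP.
  have [hPI nP1 _] := PP.
  apply: (not_prufer hS pP qP pq qa npa (@qpi_surj _ _ hPI nP1) (@qpi_ker _ _ hPI nP1)).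
  apply: (hres _ PP _ (qpi hPI nP1)); [exact: qpi_surj | exact: qpi_ker].
Qed.

Theorem mainTheorem2 (R S : comNzRingType) (phi : {rmorphism {poly R} -> S})
    (hS : is_localization_A phi) :
  [<-> residually PID S;
       residually valuation_domain S;
       residually bezout_domain S;
       residually prufer_domain S;
       zero_dimensional R].
Proof.
have z2 : zero_dimensional R -> residually PID S /\ residually valuation_domain S.
  move=> hz; split => P hP D pi hs hk; by have [] := zd_residual hS hz hP hs hk.
have i13 : residually PID S -> residually bezout_domain S.
  by move=> h P hP D pi hs hk; apply: pid_bezout; apply: (h P hP D pi hs hk).
have i23 : residually valuation_domain S -> residually bezout_domain S.
  by move=> h P hP D pi hs hk; apply: val_bezout; apply: (h P hP D pi hs hk).
have i34 : residually bezout_domain S -> residually prufer_domain S.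
  by move=> h P hP D pi hs hk; apply: bezout_prufer; apply: (h P hP D pi hs hk).
have i45 := L45 hS.
split; first by move=> h; apply: (z2 _).2; apply: i45; apply: i34; apply: i13.
split; first exact: i23.
split; first exact: i34.
split; first exact: i45.
by move=> h; apply: (z2 h).1.
Qed.
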